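(* Let $\pi$ be an $X_q(A_1)$-module algebra structure on $\mathbb C_q[x,y,z]$ of non-diagonal type, with $K_i(x)=\alpha_ix$, $K_i(y)=\beta_iy+t_ixz$, $K_i(z)=\gamma_iz$ ($i=1,2$). Let $a_0=(E(x))_0$, $c_0=(E(z))_0$, $a_0'=(F(x))_0$, $c_0'=(F(z))_0$. Then: 1. If $a_0\neq0$, then $\alpha_1=q$, $\alpha_2=-q$, $\beta_1^{-1}\beta_2=q$, $\gamma_1^{-1}\gamma_2=q$, $(E(x))_1=0$ and $(E(y))_1=-\frac{a_0(t_2+qt_1)}{2q\beta_1}z$. 2. If $c_0\neq0$, then $\gamma_1=q$, $\gamma_2=-q$, $\beta_1^{-1}\beta_2=q^{-1}$, $\alpha_1^{-1}\alpha_2=q^{-1}$, $(E(z))_1=0$ and $(E(y))_1=-\frac{c_0(t_1+qt_2)}{2q\beta_1}x$. 3. If $a_0'\neq0$, then $\alpha_1=q^{-1}$, $\alpha_2=-q^{-1}$, $\beta_1\beta_2^{-1}=q^{-1}$, $\gamma_1\gamma_2^{-1}=q^{-1}$, $(F(x))_1=0$ and $(F(y))_1=\frac{a_0'(t_2-qt_1)}{2q\alpha_2\gamma_2}z$. 4. If $c_0'\neq0$, then $\gamma_1=q^{-1}$, $\gamma_2=-q^{-1}$, $\beta_1\beta_2^{-1}=q$, $\alpha_1\alpha_2^{-1}=q$, $(F(z))_1=0$ and $(F(y))_1=\frac{c_0'(qt_2-t_1)}{2q\alpha_2\gamma_2}x$.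
   Context: Fix $q\in\mathbb C^*$ not a root of unity, i.e. $q^n\neq1$ for all nonzero integers $n$. $X_q(A_1)$ is the unital associative $\mathbb C$-algebra generated by $E,F,K_1^{\pm1},K_2^{\pm1}$ with relations: - $K_iK_i^{-1}=K_i^{-1}K_i=1$ and $K_1K_2=K_2K_1$; - $K_1E=q^{-1}EK_1$, $K_1F=qFK_1$, $K_2E=-q^{-1}EK_2$, $K_2F=-qFK_2$; - $EF-FE=\frac{K_2K_1^{-1}-K_2^{-1}K_1}{q-q^{-1}}$; - $E^2=F^2=0$. It is a Hopf algebra with $\Delta(K_i)=K_i\otimes K_i$, $\Delta(E)=E\otimes1+K_2K_1^{-1}\otimes E$, $\Delta(F)=1\otimes F+F\otimes K_2^{-1}K_1$, $\varepsilon(K_i)=1$ and $\varepsilon(E)=\varepsilon(F)=0$. $\mathbb C_q[x,y,z]$ is the unital $\mathbb C$-algebra generated by $x,y,z$ with $yx=qxy$, $zy=qyz$, $zx=qxz$. It is graded by total degree in $x,y,z$. For $p\in\mathbb C_q[x,y,z]$, $(p)_s$ denotes the homogeneous component of $p$ of degree $s$. An $X_q(A_1)$-module algebra structure on $A=\mathbb C_q[x,y,z]$ is an algebra homomorphism $\pi:X_q(A_1)\to\mathrm{End}_{\mathbb C}(A)$ such that $\pi(h)(ab)=\sum\pi(h_{(1)})(a)\pi(h_{(2)})(b)$ and $\pi(h)(1)=\varepsilon(h)1$, where $\Delta(h)=\sum h_{(1)}\otimes h_{(2)}$. One writes $h(a)$ for $\pi(h)(a)$. Concretely, $K_1,K_2$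 act by algebra automorphisms, $E(ab)=E(a)b+K_2K_1^{-1}(a)E(b)$ and $F(ab)=aF(b)+F(a)K_2^{-1}K_1(b)$. The structure is of non-diagonal type if there are $\alpha_i,\beta_i,\gamma_i,t_i\in\mathbb C^*$ ($i=1,2$) with $K_i(x)=\alpha_ix$, $K_i(y)=\beta_iy+t_ixz$, $K_i(z)=\gamma_iz$. *)

(* Defs.v *)
From HB Require Import structures.
From mathcomp Require Import all_boot all_order all_algebra.
From mathcomp Require Import complex.
From mathcomp Require Import Rstruct.
Set Implicit Arguments. Unset Strict Implicit. Unset Printing Implicit Defensive.
Import Order.TTheory GRing.Theory Num.Theory.
Local Open Scope ring_scope.

Definition C : fieldType := (Rdefinitions.R)[i].

(* Underlying vector space of C_q[x,y,z]: the space with basis the ordered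
   monomials x^i y^j z^k, represented by triply nested polynomials:
   the coefficient of x^i y^j z^k in p is  p`_i`_j`_k. *)
Definition A := {poly {poly {poly C}}}.

Definition coef3 (p : A) (i j k : nat) : C := p`_i`_j`_k.

Definition mono (i j k : nat) : A :=
  ((('X^k : {poly C})%:P * 'X^j : {poly {poly C}})%:P * 'X^i).

Definition scal (c : C) (p : A) : A := (c%:P%:P%:P) * p.

(* the (twisted) multiplication of C_q[x,y,z], with y x = q x y, z y = q y z,
   z x = q x z:
   (x^i y^j z^k) (x^d y^e z^f) = q^(j d + k d + k e) x^(i+d) y^(j+e) z^(k+f),
   extended bilinearly. *)
Definition qmul (q : C) (a b : A) : A :=
  \sum_(i < size a) \sum_(j < size a`_i) \sum_(k < size a`_i`_j)
  \sum_(d < size b) \sum_(e < size b`_d) \sum_(f < size b`_d`_e)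
    scal (coef3 a i j k * coef3 b d e f * q ^+ (j * d + k * d + k * e)%N)
         (mono (i + d) (j + e) (k + f)).

Definition one : A := mono 0 0 0.
Definition gx : A := mono 1 0 0.
Definition gy : A := mono 0 1 0.
Definition gz : A := mono 0 0 1.

Definition hcomp (s : nat) (p : A) : A :=
  \sum_(i < s.+1) \sum_(j < s.+1) \sum_(k < s.+1 | (i + j + k == s)%N)
    scal (coef3 p i j k) (mono i j k).

Definition Clinear (f : A -> A) : Prop :=
  forall (c : C) (a b : A), f (scal c a + b) = scal c (f a) + f b.

(* An X_q(A_1)-module algebra structure on C_q[x,y,z], given by the images
   E, F, K1, K2, K1', K2' (K1' = K1^{-1}, K2' = K2^{-1}) of the generators:
   they are C-linear endomorphisms satisfying the defining relations of
   X_q(A_1) (so that they define an algebra map X_q(A_1) -> End_C(A)),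
   and the module-algebra compatibilities on generators
   (which imply them for all h since Delta and epsilon are algebra maps). *)
Definition module_algebra (q : C) (E F K1 K2 K1' K2' : A -> A) : Prop :=
  (Clinear E /\ Clinear F /\ Clinear K1 /\ Clinear K2 /\ Clinear K1'
     /\ Clinear K2') /\
  ((forall a, K1 (K1' a) = a) /\ (forall a, K1' (K1 a) = a) /\
   (forall a, K2 (K2' a) = a) /\ (forall a, K2' (K2 a) = a) /\
   (forall a, K1 (K2 a) = K2 (K1 a))) /\
  ((forall a, K1 (E a) = scal q^-1 (E (K1 a))) /\
   (forall a, K1 (F a) = scal q (F (K1 a))) /\
   (forall a, K2 (E a) = scal (- q^-1) (E (K2 a))) /\
   (forall a, K2 (F a) = scal (- q) (F (K2 a)))) /\
  ((forall a, E (F a) - F (E a)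
              = scal (q - q^-1)^-1 (K2 (K1' a) - K2' (K1 a))) /\
   (forall a, E (E a) = 0) /\ (forall a, F (F a) = 0)) /\
  ((forall a b, K1 (qmul q a b) = qmul q (K1 a) (K1 b)) /\
   (forall a b, K2 (qmul q a b) = qmul q (K2 a) (K2 b)) /\
   (forall a b, E (qmul q a b) = qmul q (E a) b + qmul q (K2 (K1' a)) (E b)) /\
   (forall a b, F (qmul q a b) = qmul q a (F b) + qmul q (F a) (K2' (K1 b))) /\
   K1 one = one /\ K2 one = one /\ E one = 0 /\ F one = 0).

(* Main.v *)
Require Import Defs.
From HB Require Import structures.
From mathcomp Require Import all_boot all_order all_algebra.
From mathcomp Require Import complex.
From mathcomp Require Import Rstruct.
From mathcomp Require Import ring.
Set Implicit Arguments. Unset Strict Implicit. Unset Printing Implicit Defensive.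
Import GRing.Theory.
Local Open Scope ring_scope.


Lemma coef3_add a b i j k : coef3 (a + b) i j k = coef3 a i j k + coef3 b i j k.
Proof. by rewrite /coef3 !coefD. Qed.
Lemma coef3_scal c a i j k : coef3 (scal c a) i j k = c * coef3 a i j k.
Proof. by rewrite /coef3 /scal !coefCM. Qed.
Lemma coef3_0 i j k : coef3 0 i j k = 0.
Proof. by rewrite /coef3 !coef0. Qed.
Lemma coef3_sum (I : Type) (r : seq I) (P : pred I) (F : I -> A) i j k :
  coef3 (\sum_(x <- r | P x) F x) i j k = \sum_(x <- r | P x) coef3 (F x) i j k.
Proof. by rewrite /coef3 !coef_sum. Qed.

Lemma A_ext a b : (forall i j k, coef3 a i j k = coef3 b i j k) -> a = b.
Proof.
move=> H; apply/polyP => i; apply/polyP => j; apply/polyP => k; exact: H.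
Qed.

Lemma sum_ext0 n m (H : nat -> C) : (n <= m)%N -> (forall i, (n <= i)%N -> H i = 0) ->
  \sum_(i < m) H i = \sum_(i < n) H i.
Proof.
move=> nm Hz; rewrite -!(big_mkord xpredT) (big_cat_nat (leq0n n) nm) /=.
rewrite [X in _ + X]big1_seq ?addr0 // => i /andP[_]; rewrite mem_index_iota.
by case/andP => /Hz.
Qed.

Lemma sum_box s n (H : nat -> C) : (forall i, (s <= i)%N -> H i = 0) ->
  (forall i, (n <= i)%N -> H i = 0) -> \sum_(i < s) H i = \sum_(i < n) H i.
Proof.
move=> Hs Hn; rewrite -(@sum_ext0 s (maxn s n)) ?leq_maxl //.
by rewrite (@sum_ext0 n (maxn s n)) ?leq_maxr.
Qed.
Lemma coef3_mono a b c i j k :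
  coef3 (mono a b c) i j k = ((i == a) && (j == b) && (k == c))%:R.
Proof.
rewrite /coef3 /mono coefCM coefXn; case: (i == a); last by rewrite mulr0 !coef0.
rewrite mulr1 coefCM coefXn; case: (j == b); last by rewrite mulr0 !coef0.
by rewrite mulr1 coefXn.
Qed.

Definition qterm (q : C) (a b : A) u v w (i j k d e f : nat) : C :=
  coef3 a i j k * coef3 b d e f * q ^+ (j * d + k * d + k * e)%N *
  ((u == i + d) && (v == j + e) && (w == k + f))%N%:R.


Definition L6 (q : C) (a b : A) (u v w i j k d e f : nat) := qterm q a b u v w i j k d e f.
Definition L5 (q : C) (a b : A) (u v w i j k d e : nat) := \sum_(f < size b`_d`_e) L6 q a b u v w i j k d e f.
Definition L4 (q : C) (a b : A) (u v w i j k d : nat) := \sum_(e < size b`_d) L5 q a b u v w i j k d e.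
Definition L3 (q : C) (a b : A) (u v w i j k : nat) := \sum_(d < size b) L4 q a b u v w i j k d.
Definition L2 (q : C) (a b : A) (u v w i j : nat) := \sum_(k < size a`_i`_j) L3 q a b u v w i j k.
Definition L1 (q : C) (a b : A) (u v w i : nat) := \sum_(j < size a`_i) L2 q a b u v w i j.

Lemma qmul_coef q a b u v w :
  coef3 (qmul q a b) u v w = \sum_(i < size a) L1 q a b u v w i.
Proof.
rewrite /qmul coef3_sum; apply: eq_bigr => i _.
rewrite coef3_sum; apply: eq_bigr => j _.
rewrite coef3_sum; apply: eq_bigr => k _.
rewrite coef3_sum; apply: eq_bigr => d _.
rewrite coef3_sum; apply: eq_bigr => e _.
rewrite coef3_sum; apply: eq_bigr => f _.
by rewrite coef3_scal coef3_mono /L6 /qterm.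
Qed.

Lemma ltn_false m n : (n <= m)%N -> (m < n)%N = false.
Proof. by rewrite ltnNge => ->. Qed.

Lemma qmul_box q a b u v w ia ja ka db eb fb :
 (forall i j k d e f, ~~[&& (i < ia)%N, (j < ja)%N, (k < ka)%N, (d < db)%N, (e < eb)%N & (f < fb)%N] ->
    qterm q a b u v w i j k d e f = 0) ->
 coef3 (qmul q a b) u v w =
  \sum_(i < ia) \sum_(j < ja) \sum_(k < ka)
  \sum_(d < db) \sum_(e < eb) \sum_(f < fb) qterm q a b u v w i j k d e f.
Proof.
move=> Hz; rewrite qmul_coef.
rewrite (sum_box (n := ia)); last first.
- move=> i hi; rewrite /L1; do 5 (rewrite big1 // => ? _; rewrite /L2 /L3 /L4 /L5).
  by rewrite /L6 Hz // (ltn_false hi) /= ?andbF.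
- by move=> i hi; rewrite /L1 nth_default // size_poly0 big_ord0.
apply: eq_bigr => i _; rewrite /L1.
rewrite (sum_box (n := ja)); last first.
- move=> j hj; rewrite /L2; do 4 (rewrite big1 // => ? _; rewrite /L3 /L4 /L5).
  by rewrite /L6 Hz // (ltn_false hj) /= ?andbF.
- by move=> j hj; rewrite /L2 nth_default // size_poly0 big_ord0.
apply: eq_bigr => j _; rewrite /L2.
rewrite (sum_box (n := ka)); last first.
- move=> k hk; rewrite /L3; do 3 (rewrite big1 // => ? _; rewrite /L4 /L5).
  by rewrite /L6 Hz // (ltn_false hk) /= ?andbF.
- move=> k hk; rewrite /L3; do 3 (rewrite big1 // => ? _; rewrite /L4 /L5).
  rewrite /L6 /qterm.
  have -> : coef3 a i j k = 0 by rewrite /coef3 nth_default.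
  by rewrite !mul0r.
apply: eq_bigr => k _; rewrite /L3.
rewrite (sum_box (n := db)); last first.
- move=> d hd; rewrite /L4; do 2 (rewrite big1 // => ? _; rewrite /L5).
  by rewrite /L6 Hz // (ltn_false hd) /= ?andbF.
- by move=> d hd; rewrite /L4 nth_default // size_poly0 big_ord0.
apply: eq_bigr => d _; rewrite /L4.
rewrite (sum_box (n := eb)); last first.
- move=> e he; rewrite /L5; rewrite big1 // => ? _.
  by rewrite /L6 Hz // (ltn_false he) /= ?andbF.
- by move=> e he; rewrite /L5 nth_default // size_poly0 big_ord0.
apply: eq_bigr => e _; rewrite /L5.
rewrite (sum_box (n := fb)) //.
- move=> f hf; rewrite /L6 /qterm.
  have -> : coef3 b d e f = 0 by rewrite /coef3 nth_default.
  by rewrite mulr0 !mul0r.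
- by move=> f hf; rewrite /L6 Hz // (ltn_false hf) /= ?andbF.
Qed.


Lemma qmul_small q a b u v w :
  coef3 (qmul q a b) u v w =
  \sum_(i < u.+1) \sum_(j < v.+1) \sum_(k < w.+1)
  \sum_(d < u.+1) \sum_(e < v.+1) \sum_(f < w.+1) qterm q a b u v w i j k d e f.
Proof.
apply: qmul_box => i j k d e f H; rewrite /qterm.
case E: ((u == i + d) && (v == j + e) && (w == k + f)); last by rewrite mulr0.
move/andP: E => [/andP [/eqP Eu /eqP Ev] /eqP Ew].
by move: H; rewrite Eu Ev Ew !ltnS !leq_addr !leq_addl.
Qed.

Lemma qmul000 q a b : coef3 (qmul q a b) 0 0 0 = coef3 a 0 0 0 * coef3 b 0 0 0.
Proof.
by rewrite qmul_small !big_ord1 /qterm /= mulr1 expr0 mulr1.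
Qed.

Lemma qmul100 q a b : coef3 (qmul q a b) 1 0 0 =
  coef3 a 0 0 0 * coef3 b 1 0 0 + coef3 a 1 0 0 * coef3 b 0 0 0.
Proof.
rewrite qmul_small; rewrite !(big_ord_recr, big_ord0) /=.
by rewrite /qterm /= !(add0r, addr0, mulr0, mulr1, mul0n, muln0, addn0, expr0).
Qed.

Ltac qlow := rewrite qmul_small; rewrite !(big_ord_recr, big_ord0) /=;
  rewrite /qterm /= !(add0r, addr0, mulr0, mulr1, mul0n, muln0, addn0, expr0).

Lemma qmul010 q a b : coef3 (qmul q a b) 0 1 0 =
  coef3 a 0 0 0 * coef3 b 0 1 0 + coef3 a 0 1 0 * coef3 b 0 0 0.
Proof. by qlow. Qed.
Lemma qmul001 q a b : coef3 (qmul q a b) 0 0 1 =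
  coef3 a 0 0 0 * coef3 b 0 0 1 + coef3 a 0 0 1 * coef3 b 0 0 0.
Proof. by qlow. Qed.

Lemma sum_last n (G : 'I_n.+1 -> C) :
  (forall x : 'I_n.+1, (x < n)%N -> G x = 0) -> \sum_(x < n.+1) G x = G ord_max.
Proof.
move=> H; rewrite big_ord_recr /= big1 ?add0r // => x _; apply: H.
by rewrite /= ltn_ord.
Qed.

Lemma box_delta (T : nat -> nat -> nat -> nat -> nat -> nat -> C) i j k d e f :
  (forall i' j' k' d' e' f', ~~ [&& i' == i, j' == j, k' == k, d' == d, e' == e & f' == f] ->
     T i' j' k' d' e' f' = 0) ->
  \sum_(i' < i.+1) \sum_(j' < j.+1) \sum_(k' < k.+1)
  \sum_(d' < d.+1) \sum_(e' < e.+1) \sum_(f' < f.+1) T i' j' k' d' e' f' = T i j k d e f.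
Proof.
move=> H.
have ne m n : (m < n)%N -> (m == n) = false by move=> h; rewrite ltn_eqF.
rewrite sum_last /=; last first.
  move=> x hx; do 5 (rewrite big1 // => ? _).
  by apply: H; rewrite ne.
rewrite sum_last /=; last first.
  move=> x hx; do 4 (rewrite big1 // => ? _).
  by apply: H; rewrite (ne x) ?eqxx ?andbF.
rewrite sum_last /=; last first.
  move=> x hx; do 3 (rewrite big1 // => ? _).
  by apply: H; rewrite (ne x) ?eqxx ?andbF.
rewrite sum_last /=; last first.
  move=> x hx; do 2 (rewrite big1 // => ? _).
  by apply: H; rewrite (ne x) ?eqxx ?andbF.
rewrite sum_last /=; last first.
  move=> x hx; rewrite big1 // => ? _.
  by apply: H; rewrite (ne x) ?eqxx ?andbF.
rewrite sum_last //= => x hx.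
by apply: H; rewrite (ne x) ?eqxx ?andbF.
Qed.

Lemma qterm_smono q c c' i j k d e f u v w i' j' k' d' e' f' :
  qterm q (scal c (mono i j k)) (scal c' (mono d e f)) u v w i' j' k' d' e' f' =
  if [&& i' == i, j' == j, k' == k, d' == d, e' == e & f' == f] then
    c * c' * q ^+ (j * d + k * d + k * e) * ((u == i + d) && (v == j + e) && (w == k + f))%:R
  else 0.
Proof.
rewrite /qterm !coef3_scal !coef3_mono.
case: (i' =P i) => [->|_] /=; last by rewrite !mulr0 !mul0r.
case: (j' =P j) => [->|_] /=; last by rewrite !mulr0 !mul0r.
case: (k' =P k) => [->|_] /=; last by rewrite !mulr0 !mul0r.
case: (d' =P d) => [->|_] /=; last by rewrite !mulr0 !mul0r.
case: (e' =P e) => [->|_] /=; last by rewrite !mulr0 !mul0r.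
case: (f' =P f) => [->|_] /=; last by rewrite !mulr0 !mul0r.
by rewrite !mulr1.
Qed.

Lemma qmul_smono q c c' i j k d e f :
  qmul q (scal c (mono i j k)) (scal c' (mono d e f)) =
  scal (c * c' * q ^+ (j * d + k * d + k * e)) (mono (i + d) (j + e) (k + f)).
Proof.
apply: A_ext => u v w.
rewrite (qmul_box (ia := i.+1) (ja := j.+1) (ka := k.+1) (db := d.+1) (eb := e.+1) (fb := f.+1)); last first.
  move=> i' j' k' d' e' f' H; rewrite qterm_smono.
  case E: [&& _, _, _, _, _ & _] => //.
  by move: H; move: E => /andP[/eqP-> /andP[/eqP-> /andP[/eqP-> /andP[/eqP-> /andP[/eqP-> /eqP->]]]]]; rewrite !ltnSn.
rewrite box_delta; last by move=> ? ? ? ? ? ? /negbTE H; rewrite qterm_smono H.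
by rewrite qterm_smono !eqxx /= coef3_scal coef3_mono.
Qed.

Lemma pdecomp (R : nzRingType) (p : {poly R}) : p = \sum_(i < size p) (p`_i)%:P * 'X^i.
Proof. by rewrite -{1}[p]coefK poly_def; apply: eq_bigr => i _; rewrite mul_polyC. Qed.

Lemma decomp (p : A) : p = \sum_(i < size p) \sum_(j < size p`_i) \sum_(k < size p`_i`_j)
   scal (coef3 p i j k) (mono i j k).
Proof.
rewrite {1}[p]pdecomp; apply: eq_bigr => i _.
rewrite {1}[p`_i]pdecomp rmorph_sum mulr_suml; apply: eq_bigr => j _.
rewrite {1}[p`_i`_j]pdecomp rmorph_sum mulr_suml rmorph_sum mulr_suml; apply: eq_bigr => k _.
rewrite /scal /mono /coef3 !mulrA -!rmorphM /= mulrA -!rmorphM /=.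
done.
Qed.

Lemma scal1 a : scal 1 a = a.
Proof. by rewrite /scal !polyC1 mul1r. Qed.
Lemma scal0 c : scal c 0 = 0.
Proof. by rewrite /scal mulr0. Qed.
Lemma scal0l a : scal 0 a = 0.
Proof. by rewrite /scal !polyC0 mul0r. Qed.
Lemma scalA c d a : scal c (scal d a) = scal (c * d) a.
Proof. by rewrite /scal mulrA -!rmorphM. Qed.
Lemma scalD c a b : scal c (a + b) = scal c a + scal c b.
Proof. by rewrite /scal mulrDr. Qed.

Lemma lin0 (f : A -> A) (Hf : Clinear f) : f 0 = 0.
Proof.
have := Hf 1 0 0; rewrite !scal1 addr0 => /esym/eqP.
by rewrite -subr_eq0 addrK => /eqP.
Qed.
Lemma linD (f : A -> A) (Hf : Clinear f) a b : f (a + b) = f a + f b.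
Proof. by rewrite -{1}[a]scal1 Hf scal1. Qed.
Lemma linZ (f : A -> A) (Hf : Clinear f) c a : f (scal c a) = scal c (f a).
Proof. by rewrite -[scal c a]addr0 Hf (lin0 Hf) addr0. Qed.
Lemma linsum (f : A -> A) (Hf : Clinear f) (I : Type) (r : seq I) (P : pred I) (F : I -> A) :
  f (\sum_(x <- r | P x) F x) = \sum_(x <- r | P x) f (F x).
Proof.
apply: (big_rec2 (fun x y => f x = y)); first exact: (lin0 Hf).
by move=> i x y _ <-; rewrite (linD Hf).
Qed.

Lemma hcomp1 p : hcomp 1 p = scal (coef3 p 1 0 0) gx + scal (coef3 p 0 1 0) gy + scal (coef3 p 0 0 1) gz.
Proof.
rewrite /hcomp !(big_ord_recr, big_ord0) /=.
do 4 rewrite big_mkcond !big_ord_recr big_ord0 /=.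
rewrite /gx /gy /gz !add0r !addr0; ring.
Qed.

Lemma monoSx q i j k : mono i.+1 j k = qmul q gx (mono i j k).
Proof.
have := qmul_smono q 1 1 1 0 0 i j k.
by rewrite !scal1 ?mul0n ?muln0 ?addn0 ?expr0 ?mulr1 ?scal1 ?add1n ?add0n => ->.
Qed.
Lemma monoSy q j k : mono 0 j.+1 k = qmul q gy (mono 0 j k).
Proof.
have := qmul_smono q 1 1 0 1 0 0 j k.
by rewrite !scal1 ?mul0n ?muln0 ?addn0 ?expr0 ?mulr1 ?scal1 ?add1n ?add0n => ->.
Qed.
Lemma monoSz q k : mono 0 0 k.+1 = qmul q gz (mono 0 0 k).
Proof.
have := qmul_smono q 1 1 0 0 1 0 0 k.
by rewrite !scal1 ?mul0n ?muln0 ?addn0 ?expr0 ?mulr1 ?scal1 ?add1n ?add0n => ->.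
Qed.

Definition Slow (K : A -> A) (al be ga : C) (p : A) :=
  [/\ coef3 (K p) 0 0 0 = coef3 p 0 0 0, coef3 (K p) 1 0 0 = al * coef3 p 1 0 0,
      coef3 (K p) 0 1 0 = be * coef3 p 0 1 0 & coef3 (K p) 0 0 1 = ga * coef3 p 0 0 1].

Lemma Klow q K (al be ga t : C) : Clinear K ->
  (forall a b, K (qmul q a b) = qmul q (K a) (K b)) -> K Defs.one = Defs.one ->
  K gx = scal al gx -> K gy = scal be gy + scal t (qmul q gx gz) -> K gz = scal ga gz ->
  forall p, Slow K al be ga p.
Proof.
move=> Hl Hm H1 Hx Hy Hz.
have Smul a b : Slow K al be ga a -> Slow K al be ga b -> Slow K al be ga (qmul q a b).
  case=> a0 a1 a2 a3 [b0 b1 b2 b3]; split;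
    rewrite Hm ?qmul000 ?qmul100 ?qmul010 ?qmul001 a0 b0 ?a1 ?b1 ?a2 ?b2 ?a3 ?b3; ring.
have Sx : Slow K al be ga gx.
  by rewrite /Slow Hx !coef3_scal /gx !coef3_mono /= !mulr0 !mulr1.
have Sy : Slow K al be ga gy.
  rewrite /Slow Hy !coef3_add !coef3_scal ?qmul000 ?qmul100 ?qmul010 ?qmul001 /gx /gy /gz !coef3_mono /=.
  by rewrite !(mulr0, mulr1, mul0r, addr0, add0r).
have Sz : Slow K al be ga gz.
  by rewrite /Slow Hz !coef3_scal /gz !coef3_mono /= !mulr0 !mulr1.
have Smono i j k : Slow K al be ga (mono i j k).
  elim: i => [|i IH]; last by rewrite (monoSx q); apply: Smul.
  elim: j => [|j IH]; last by rewrite (monoSy q); apply: Smul.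
  elim: k => [|k IH]; last by rewrite (monoSz q); apply: Smul.
  by rewrite /Slow -/Defs.one H1 /Defs.one !coef3_mono /= !mulr0.
move=> p.
have E1 u v w : coef3 (K p) u v w = \sum_(i < size p) \sum_(j < size p`_i) \sum_(k < size p`_i`_j)
   coef3 p i j k * coef3 (K (mono i j k)) u v w.
  rewrite {1}[p]decomp (linsum Hl) coef3_sum; apply: eq_bigr => i _.
  rewrite (linsum Hl) coef3_sum; apply: eq_bigr => j _.
  rewrite (linsum Hl) coef3_sum; apply: eq_bigr => k _.
  by rewrite (linZ Hl) coef3_scal.
have E2 u v w : coef3 p u v w = \sum_(i < size p) \sum_(j < size p`_i) \sum_(k < size p`_i`_j)
   coef3 p i j k * coef3 (mono i j k) u v w.
  rewrite {1}[p]decomp coef3_sum; apply: eq_bigr => i _.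
  rewrite coef3_sum; apply: eq_bigr => j _.
  rewrite coef3_sum; apply: eq_bigr => k _.
  by rewrite coef3_scal.
split; rewrite E1 [coef3 p _ _ _]E2 ?mulr_sumr; apply: eq_bigr => i _;
  rewrite ?mulr_sumr; apply: eq_bigr => j _; rewrite ?mulr_sumr; apply: eq_bigr => k _;
  case: (Smono i j k) => h0 h1 h2 h3; rewrite ?h0 ?h1 ?h2 ?h3; ring.
Qed.

Lemma Kinvlow K K' (al be ga : C) : (forall p, Slow K al be ga p) -> (forall a, K (K' a) = a) ->
  al != 0 -> be != 0 -> ga != 0 -> forall p, Slow K' al^-1 be^-1 ga^-1 p.
Proof.
move=> HS HK an bn gn p; case: (HS (K' p)); rewrite HK => h0 h1 h2 h3.
by split; rewrite ?h0 ?h1 ?h2 ?h3 // mulrA mulVf ?mul1r.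
Qed.

Lemma Slow0 K al be ga p : Slow K al be ga p -> coef3 (K p) 0 0 0 = coef3 p 0 0 0.
Proof. by case. Qed.
Lemma Slow1 K al be ga p : Slow K al be ga p -> coef3 (K p) 1 0 0 = al * coef3 p 1 0 0.
Proof. by case. Qed.
Lemma Slow2 K al be ga p : Slow K al be ga p -> coef3 (K p) 0 1 0 = be * coef3 p 0 1 0.
Proof. by case. Qed.
Lemma Slow3 K al be ga p : Slow K al be ga p -> coef3 (K p) 0 0 1 = ga * coef3 p 0 0 1.
Proof. by case. Qed.

Lemma yx q : qmul q gy gx = scal q (qmul q gx gy).
Proof.
rewrite -[gy]scal1 -[gx]scal1 !qmul_smono scalA.
by rewrite !(mul0n, muln0, addn0, add0n, muln1, expr1, expr0, mulr1, mul1r).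
Qed.
Lemma zx q : qmul q gz gx = scal q (qmul q gx gz).
Proof.
rewrite -[gz]scal1 -[gx]scal1 !qmul_smono scalA.
by rewrite !(mul0n, muln0, addn0, add0n, muln1, expr1, expr0, mulr1, mul1r).
Qed.
Lemma xz q : qmul q gx gz = mono 1 0 1.
Proof.
rewrite -[gz]scal1 -[gx]scal1 !qmul_smono.
by rewrite !(mul0n, muln0, addn0, add0n, muln1, expr1, expr0, mulr1, mul1r) scal1.
Qed.
Lemma sxz q c c' : qmul q (scal c gx) (scal c' gz) = scal (c * c') (mono 1 0 1).
Proof.
rewrite qmul_smono.
by rewrite !(mul0n, muln0, addn0, add0n, muln1, expr1, expr0, mulr1, mul1r).
Qed.

Lemma cg : (coef3 gx 0 0 0 = 0 /\ coef3 gx 1 0 0 = 1 /\ coef3 gx 0 1 0 = 0 /\ coef3 gx 0 0 1 = 0) /\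
  (coef3 gy 0 0 0 = 0 /\ coef3 gy 1 0 0 = 0 /\ coef3 gy 0 1 0 = 1 /\ coef3 gy 0 0 1 = 0) /\
  (coef3 gz 0 0 0 = 0 /\ coef3 gz 1 0 0 = 0 /\ coef3 gz 0 1 0 = 0 /\ coef3 gz 0 0 1 = 1).
Proof. by rewrite /gx /gy /gz !coef3_mono. Qed.


Lemma two_neq0 : (2 : C) != 0.
Proof.
have : (2 : (Rdefinitions.R)[i]) != 0 by rewrite Num.Theory.pnatr_eq0.
done.
Qed.

Lemma cc (a b : A) i j k : a = b -> coef3 a i j k = coef3 b i j k.
Proof. by move=> ->. Qed.

Lemma zy q : qmul q gz gy = scal q (qmul q gy gz).
Proof.
rewrite -[gz]scal1 -[gy]scal1 !qmul_smono scalA.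
by rewrite !(mul0n, muln0, addn0, add0n, muln1, expr1, expr0, mulr1, mul1r).
Qed.

Lemma lc1 (L R l1 r1 c1 : C) : l1 = r1 -> L - R = c1 * (l1 - r1) -> L = R.
Proof. by move=> -> h; apply/eqP; rewrite -subr_eq0 h subrr mulr0. Qed.
Lemma lc2 (L R l1 r1 l2 r2 c1 c2 : C) : l1 = r1 -> l2 = r2 ->
  L - R = c1 * (l1 - r1) + c2 * (l2 - r2) -> L = R.
Proof. by move=> -> -> h; apply/eqP; rewrite -subr_eq0 h !subrr !mulr0 addr0. Qed.
Lemma lc3 (L R l1 r1 l2 r2 l3 r3 c1 c2 c3 : C) : l1 = r1 -> l2 = r2 -> l3 = r3 ->
  L - R = c1 * (l1 - r1) + c2 * (l2 - r2) + c3 * (l3 - r3) -> L = R.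
Proof. by move=> -> -> -> h; apply/eqP; rewrite -subr_eq0 h !subrr !mulr0 !addr0. Qed.

Lemma cgx0 : coef3 gx 0 0 0 = 0. Proof. by rewrite /gx coef3_mono. Qed.
Lemma cgx1 : coef3 gx 1 0 0 = 1. Proof. by rewrite /gx coef3_mono. Qed.
Lemma cgx2 : coef3 gx 0 1 0 = 0. Proof. by rewrite /gx coef3_mono. Qed.
Lemma cgx3 : coef3 gx 0 0 1 = 0. Proof. by rewrite /gx coef3_mono. Qed.
Lemma cgy0 : coef3 gy 0 0 0 = 0. Proof. by rewrite /gy coef3_mono. Qed.
Lemma cgy1 : coef3 gy 1 0 0 = 0. Proof. by rewrite /gy coef3_mono. Qed.
Lemma cgy2 : coef3 gy 0 1 0 = 1. Proof. by rewrite /gy coef3_mono. Qed.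
Lemma cgy3 : coef3 gy 0 0 1 = 0. Proof. by rewrite /gy coef3_mono. Qed.
Lemma cgz0 : coef3 gz 0 0 0 = 0. Proof. by rewrite /gz coef3_mono. Qed.
Lemma cgz1 : coef3 gz 1 0 0 = 0. Proof. by rewrite /gz coef3_mono. Qed.
Lemma cgz2 : coef3 gz 0 1 0 = 0. Proof. by rewrite /gz coef3_mono. Qed.
Lemma cgz3 : coef3 gz 0 0 1 = 1. Proof. by rewrite /gz coef3_mono. Qed.
Lemma cxz0 q : coef3 (qmul q gx gz) 0 0 0 = 0. Proof. by rewrite xz coef3_mono. Qed.
Lemma cxz1 q : coef3 (qmul q gx gz) 1 0 0 = 0. Proof. by rewrite xz coef3_mono. Qed.
Lemma cxz2 q : coef3 (qmul q gx gz) 0 1 0 = 0. Proof. by rewrite xz coef3_mono. Qed.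
Lemma cxz3 q : coef3 (qmul q gx gz) 0 0 1 = 0. Proof. by rewrite xz coef3_mono. Qed.

Lemma cgy101 : coef3 gy 1 0 1 = 0. Proof. by rewrite /gy coef3_mono. Qed.
Lemma cm101 : coef3 (mono 1 0 1) 1 0 1 = 1. Proof. by rewrite coef3_mono. Qed.

Lemma hcomp_0 p : coef3 p 1 0 0 = 0 -> coef3 p 0 1 0 = 0 -> coef3 p 0 0 1 = 0 -> hcomp 1 p = 0.
Proof. by move=> h1 h2 h3; rewrite hcomp1 h1 h2 h3 !scal0l !addr0. Qed.
Lemma hcomp_z p c : coef3 p 1 0 0 = 0 -> coef3 p 0 1 0 = 0 -> coef3 p 0 0 1 = c -> hcomp 1 p = scal c gz.
Proof. by move=> h1 h2 h3; rewrite hcomp1 h1 h2 h3 !scal0l !add0r. Qed.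
Lemma hcomp_x p c : coef3 p 1 0 0 = c -> coef3 p 0 1 0 = 0 -> coef3 p 0 0 1 = 0 -> hcomp 1 p = scal c gx.
Proof. by move=> h1 h2 h3; rewrite hcomp1 h1 h2 h3 !scal0l !addr0. Qed.

Ltac csh S1 S2 S1' S2' H := rewrite ?(cxz0, cxz1, cxz2, cxz3) in H;
   rewrite ?(coef3_add, coef3_scal, qmul000, qmul100, qmul010, qmul001,
   Slow0 (S1 _), Slow1 (S1 _), Slow2 (S1 _), Slow3 (S1 _),
   Slow0 (S2 _), Slow1 (S2 _), Slow2 (S2 _), Slow3 (S2 _),
   Slow0 (S1' _), Slow1 (S1' _), Slow2 (S1' _), Slow3 (S1' _),
   Slow0 (S2' _), Slow1 (S2' _), Slow2 (S2' _), Slow3 (S2' _)) in H;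
   rewrite ?(cgx0, cgx1, cgx2, cgx3, cgy0, cgy1, cgy2, cgy3, cgz0, cgz1, cgz2, cgz3) in H;
   rewrite ?(mulr0, mul0r, mulr1, mul1r, addr0, add0r) in H.

Ltac fld := field; repeat (apply/andP; split); try assumption.

Theorem lemma3p3 (q : C) (E F K1 K2 K1' K2' : A -> A)
  (al1 al2 be1 be2 ga1 ga2 t1 t2 : C) :
  q != 0 -> (forall n : nat, (0 < n)%N -> q ^+ n != 1) ->
  module_algebra q E F K1 K2 K1' K2' ->
  [/\ al1 != 0, al2 != 0, be1 != 0 & be2 != 0] ->
  [/\ ga1 != 0, ga2 != 0, t1 != 0 & t2 != 0] ->
  K1 gx = scal al1 gx -> K2 gx = scal al2 gx ->
  K1 gy = scal be1 gy + scal t1 (qmul q gx gz) ->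
  K2 gy = scal be2 gy + scal t2 (qmul q gx gz) ->
  K1 gz = scal ga1 gz -> K2 gz = scal ga2 gz ->
  let a0 := coef3 (E gx) 0 0 0 in
  let c0 := coef3 (E gz) 0 0 0 in
  let a0' := coef3 (F gx) 0 0 0 in
  let c0' := coef3 (F gz) 0 0 0 in
  (a0 != 0 ->
     al1 = q /\ al2 = - q /\ be1^-1 * be2 = q /\ ga1^-1 * ga2 = q /\
     hcomp 1 (E gx) = 0 /\
     hcomp 1 (E gy) = scal (- (a0 * (t2 + q * t1)) / (2 * q * be1)) gz) /\
  (c0 != 0 ->
     ga1 = q /\ ga2 = - q /\ be1^-1 * be2 = q^-1 /\ al1^-1 * al2 = q^-1 /\
     hcomp 1 (E gz) = 0 /\
     hcomp 1 (E gy) = scal (- (c0 * (t1 + q * t2)) / (2 * q * be1)) gx) /\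
  (a0' != 0 ->
     al1 = q^-1 /\ al2 = - q^-1 /\ be1 * be2^-1 = q^-1 /\
     ga1 * ga2^-1 = q^-1 /\ hcomp 1 (F gx) = 0 /\
     hcomp 1 (F gy) = scal ((a0' * (t2 - q * t1)) / (2 * q * al2 * ga2)) gz) /\
  (c0' != 0 ->
     ga1 = q^-1 /\ ga2 = - q^-1 /\ be1 * be2^-1 = q /\
     al1 * al2^-1 = q /\ hcomp 1 (F gz) = 0 /\
     hcomp 1 (F gy) = scal ((c0' * (q * t2 - t1)) / (2 * q * al2 * ga2)) gx).
Proof.
move=> qn0 qroot HM [al1n al2n be1n be2n] [ga1n ga2n t1n t2n] hK1x hK2x hK1y hK2y hK1z hK2z a0 c0 a0' c0'.
case: HM => [[lE [lF [lK1 [lK2 [lK1' lK2']]]]] [[K11' [K1'1 [K22' [K2'2 K12]]]] [[K1E [K1F [K2E K2F]]] [[EF [EE FF]] [K1m [K2m [Em [Fm [K1one [K2one [Eone Fone]]]]]]]]]]].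
have S1 := Klow lK1 K1m K1one hK1x hK1y hK1z.
have S2 := Klow lK2 K2m K2one hK2x hK2y hK2z.
have S1' := Kinvlow S1 K11' al1n be1n ga1n.
have S2' := Kinvlow S2 K22' al2n be2n ga2n.
have q1 : q - 1 != 0 by rewrite subr_eq0; have := qroot 1%N isT; rewrite expr1.
have qp1 : q + 1 != 0.
  apply: contra (qroot 2%N isT) => /eqP h.
  by rewrite (_ : q = -1) ?sqrrN ?expr1n // -(addrK 1 q) h sub0r.
have two := two_neq0.
have qp1' : 1 + q != 0 by rewrite addrC.
have hE1x : K1 (E gx) = scal (q^-1 * al1) (E gx) by rewrite K1E hK1x (linZ lE) scalA.
have hE2x : K2 (E gx) = scal (- q^-1) (scal al2 (E gx)) by rewrite K2E hK2x (linZ lE).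
have hE1z : K1 (E gz) = scal (q^-1 * ga1) (E gz) by rewrite K1E hK1z (linZ lE) scalA.
have hE2z : K2 (E gz) = scal (- q^-1) (scal ga2 (E gz)) by rewrite K2E hK2z (linZ lE).
have Exz : E (qmul q gx gz) = qmul q (E gx) gz + qmul q (K2 (K1' gx)) (E gz) by rewrite Em.
have hE1y : K1 (E gy) = scal q^-1 (scal be1 (E gy) + scal t1 (E (qmul q gx gz))).
  by rewrite K1E hK1y (linD lE) !(linZ lE).
have hE2y : K2 (E gy) = scal (- q^-1) (scal be2 (E gy) + scal t2 (E (qmul q gx gz))).
  by rewrite K2E hK2y (linD lE) !(linZ lE).
have Eyx : qmul q (E gy) gx + qmul q (K2 (K1' gy)) (E gx) =
   scal q (qmul q (E gx) gy + qmul q (K2 (K1' gx)) (E gy)).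
  by rewrite -!Em -(linZ lE) yx.
have Ezx : qmul q (E gz) gx + qmul q (K2 (K1' gz)) (E gx) =
   scal q (qmul q (E gx) gz + qmul q (K2 (K1' gx)) (E gz)).
  by rewrite -!Em -(linZ lE) zx.
have Ezy : qmul q (E gz) gy + qmul q (K2 (K1' gz)) (E gy) =
   scal q (qmul q (E gy) gz + qmul q (K2 (K1' gy)) (E gz)).
  by rewrite -!Em -(linZ lE) zy.
have hF1x : K1 (F gx) = scal (q * al1) (F gx) by rewrite K1F hK1x (linZ lF) scalA.
have hF2x : K2 (F gx) = scal (- q) (scal al2 (F gx)) by rewrite K2F hK2x (linZ lF).
have hF1z : K1 (F gz) = scal (q * ga1) (F gz) by rewrite K1F hK1z (linZ lF) scalA.
have hF2z : K2 (F gz) = scal (- q) (scal ga2 (F gz)) by rewrite K2F hK2z (linZ lF).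
have Fxz : F (qmul q gx gz) = qmul q gx (F gz) + qmul q (F gx) (K2' (K1 gz)) by rewrite Fm.
have hF1y : K1 (F gy) = scal q (scal be1 (F gy) + scal t1 (F (qmul q gx gz))).
  by rewrite K1F hK1y (linD lF) !(linZ lF).
have hF2y : K2 (F gy) = scal (- q) (scal be2 (F gy) + scal t2 (F (qmul q gx gz))).
  by rewrite K2F hK2y (linD lF) !(linZ lF).
have Fyx : qmul q gy (F gx) + qmul q (F gy) (K2' (K1 gx)) =
   scal q (qmul q gx (F gy) + qmul q (F gx) (K2' (K1 gy))).
  by rewrite -!Fm -(linZ lF) yx.
have Fzx : qmul q gz (F gx) + qmul q (F gz) (K2' (K1 gx)) =
   scal q (qmul q gx (F gz) + qmul q (F gx) (K2' (K1 gz))).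
  by rewrite -!Fm -(linZ lF) zx.
have Fzy : qmul q gz (F gy) + qmul q (F gz) (K2' (K1 gy)) =
   scal q (qmul q gy (F gz) + qmul q (F gy) (K2' (K1 gz))).
  by rewrite -!Fm -(linZ lF) zy.
have Kc : be2 * t1 + t2 * (al1 * ga1) = be1 * t2 + t1 * (al2 * ga2).
  have := K12 gy; rewrite hK2y hK1y (linD lK1) (linD lK2) !(linZ lK1) !(linZ lK2).
  rewrite K1m K2m hK1x hK1z hK2x hK2z !sxz hK1y hK2y xz => /(cc 1 0 1) H.
  erewrite !coef3_add, !coef3_scal, !coef3_add, !coef3_scal, cgy101, cm101 in H.
  by rewrite !(mulr0, mul0r, mulr1, mul1r, addr0, add0r) in H.
split.
  move=> a0n.
  rewrite Exz in hE1y hE2y.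
  have e1 := cc 0 0 0 hE1x; csh S1 S2 S1' S2' e1.
  have e2 := cc 0 0 0 hE2x; csh S1 S2 S1' S2' e2.
  have e3 := cc 1 0 0 Ezx; csh S1 S2 S1' S2' e3.
  have e4 := cc 0 0 1 Ezx; csh S1 S2 S1' S2' e4.
  have e5 := cc 0 1 0 Eyx; csh S1 S2 S1' S2' e5.
  have f1 := cc 1 0 0 hE1x; csh S1 S2 S1' S2' f1.
  have f2 := cc 0 1 0 hE1x; csh S1 S2 S1' S2' f2.
  have f2' := cc 0 1 0 hE2x; csh S1 S2 S1' S2' f2'.
  have f3 := cc 0 0 1 hE1x; csh S1 S2 S1' S2' f3.
  have f3' := cc 0 0 1 hE2x; csh S1 S2 S1' S2' f3'.
  have g1 := cc 1 0 0 hE1y; csh S1 S2 S1' S2' g1.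
  have g1' := cc 1 0 0 hE2y; csh S1 S2 S1' S2' g1'.
  have g2 := cc 0 1 0 hE1y; csh S1 S2 S1' S2' g2.
  have g3 := cc 0 0 1 hE1y; csh S1 S2 S1' S2' g3.
  have g3' := cc 0 0 1 hE2y; csh S1 S2 S1' S2' g3'.
  rewrite -/a0 -/c0 in e1 e2 e3 e4 e5 f1 f2 f2' f3 f3' g1 g1' g2 g3 g3'.
  clearbody a0 c0 a0' c0'.
  have eal1 : al1 = q by apply: (lc1 (c1 := - q / a0) e1); fld.
  have eal2 : al2 = - q by apply: (lc1 (c1 := q / a0) e2); fld.
  subst al1 al2.
  have hc0 : c0 = 0 by apply: (lc1 (c1 := 1 / (1 + q)) e3); fld.
  rewrite hc0 in g1 g1'.
  have ega : ga1^-1 * ga2 = q by apply: (lc1 (c1 := 1 / a0) e4); fld.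
  have ebe : be1^-1 * be2 = q by apply: (lc1 (c1 := 1 / a0) e5); fld.
  have hga2 : ga2 = q * ga1 by apply: (lc1 (c1 := ga1) ega); fld.
  have hbe2 : be2 = q * be1 by apply: (lc1 (c1 := be1) ebe); fld.
  subst ga2 be2.
  have hp1 : coef3 (E gx) 1 0 0 = 0 by apply: (lc1 (c1 := 1 / (q - 1)) f1); fld.
  have hp2 : coef3 (E gx) 0 1 0 = 0 by apply: (lc2 (c1 := - 1 / ((q - 1) * be1)) (c2 := 1 / ((q - 1) * be1)) f2 f2'); fld.
  have hp3 : coef3 (E gx) 0 0 1 = 0 by apply: (lc2 (c1 := - 1 / ((q - 1) * ga1)) (c2 := 1 / ((q - 1) * ga1)) f3 f3'); fld.
  have hw1 : coef3 (E gy) 1 0 0 = 0 by apply: (lc2 (c1 := 1 / (q - 1)) (c2 := 1 / (q * (q - 1))) g1 g1'); fld.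
  have hw2 : coef3 (E gy) 0 1 0 = 0 by apply: (lc1 (c1 := q / ((q - 1) * be1)) g2); fld.
  split; [by [] | split; [by [] | split; [exact: ebe | split; [exact: ega | split]]]].
  exact: hcomp_0 hp1 hp2 hp3.
  apply: hcomp_z hw1 hw2 _.
  by apply: (lc2 (c1 := - q / (2 * be1)) (c2 := 1 / (2 * be1)) g3 g3'); fld.
split.
  move=> c0n.
  rewrite Exz in hE1y hE2y.
  have e1 := cc 0 0 0 hE1z; csh S1 S2 S1' S2' e1.
  have e2 := cc 0 0 0 hE2z; csh S1 S2 S1' S2' e2.
  have e3 := cc 1 0 0 Ezx; csh S1 S2 S1' S2' e3.
  have e4 := cc 0 0 1 Ezx; csh S1 S2 S1' S2' e4.
  have e5 := cc 0 1 0 Ezy; csh S1 S2 S1' S2' e5.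
  have f1 := cc 1 0 0 hE1z; csh S1 S2 S1' S2' f1.
  have f1' := cc 1 0 0 hE2z; csh S1 S2 S1' S2' f1'.
  have f2 := cc 0 1 0 hE1z; csh S1 S2 S1' S2' f2.
  have f2' := cc 0 1 0 hE2z; csh S1 S2 S1' S2' f2'.
  have f3 := cc 0 0 1 hE1z; csh S1 S2 S1' S2' f3.
  have g1 := cc 1 0 0 hE1y; csh S1 S2 S1' S2' g1.
  have g1' := cc 1 0 0 hE2y; csh S1 S2 S1' S2' g1'.
  have g2 := cc 0 1 0 hE1y; csh S1 S2 S1' S2' g2.
  have g3 := cc 0 0 1 hE1y; csh S1 S2 S1' S2' g3.
  have g3' := cc 0 0 1 hE2y; csh S1 S2 S1' S2' g3'.
  rewrite -/a0 -/c0 in e1 e2 e3 e4 e5 f1 f1' f2 f2' f3 g1 g1' g2 g3 g3'.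
  clearbody a0 c0 a0' c0'.
  have ega1 : ga1 = q by apply: (lc1 (c1 := - q / c0) e1); fld.
  have ega2 : ga2 = - q by apply: (lc1 (c1 := q / c0) e2); fld.
  subst ga1 ga2.
  have ha0 : a0 = 0 by apply: (lc1 (c1 := - 1 / (1 + q)) e4); fld.
  subst a0.
  have eal : al1^-1 * al2 = q^-1 by apply: (lc1 (c1 := - 1 / (q * c0)) e3); fld.
  have ebe : be1^-1 * be2 = q^-1 by apply: (lc1 (c1 := - 1 / (q * c0)) e5); fld.
  have hal2 : al2 = q^-1 * al1 by apply: (lc1 (c1 := al1) eal); fld.
  have hbe2 : be2 = q^-1 * be1 by apply: (lc1 (c1 := be1) ebe); fld.
  subst al2 be2.
  have hp1 : coef3 (E gz) 1 0 0 = 0.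
    by apply: (lc2 (c1 := q / (al1 * (q - 1))) (c2 := - q / (al1 * (q - 1))) f1 f1'); fld.
  have hp2 : coef3 (E gz) 0 1 0 = 0.
    by apply: (lc2 (c1 := q / (be1 * (q - 1))) (c2 := - q / (be1 * (q - 1))) f2 f2'); fld.
  have hp3 : coef3 (E gz) 0 0 1 = 0 by apply: (lc1 (c1 := 1 / (q - 1)) f3); fld.
  have hw2 : coef3 (E gy) 0 1 0 = 0 by apply: (lc1 (c1 := q / ((q - 1) * be1)) g2); fld.
  have hw3 : coef3 (E gy) 0 0 1 = 0.
    by apply: (lc2 (c1 := - 1 / (q * (q - 1))) (c2 := - 1 / (q - 1)) g3 g3'); fld.
  split; [by [] | split; [by [] | split; [exact: ebe | split; [exact: eal | split]]]].
  exact: hcomp_0 hp1 hp2 hp3.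
  apply: hcomp_x _ hw2 hw3.
  by apply: (lc2 (c1 := - q / (2 * be1)) (c2 := q ^+ 2 / (2 * be1)) g1 g1'); fld.
split.
  move=> a0n.
  rewrite Fxz in hF1y hF2y.
  have e1 := cc 0 0 0 hF1x; csh S1 S2 S1' S2' e1.
  have e2 := cc 0 0 0 hF2x; csh S1 S2 S1' S2' e2.
  have e3 := cc 1 0 0 Fzx; csh S1 S2 S1' S2' e3.
  have e4 := cc 0 0 1 Fzx; csh S1 S2 S1' S2' e4.
  have e5 := cc 0 1 0 Fyx; csh S1 S2 S1' S2' e5.
  have f1 := cc 1 0 0 hF1x; csh S1 S2 S1' S2' f1.
  have f2 := cc 0 1 0 hF1x; csh S1 S2 S1' S2' f2.
  have f2' := cc 0 1 0 hF2x; csh S1 S2 S1' S2' f2'.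
  have f3 := cc 0 0 1 hF1x; csh S1 S2 S1' S2' f3.
  have f3' := cc 0 0 1 hF2x; csh S1 S2 S1' S2' f3'.
  have g1 := cc 1 0 0 hF1y; csh S1 S2 S1' S2' g1.
  have g1' := cc 1 0 0 hF2y; csh S1 S2 S1' S2' g1'.
  have g2 := cc 0 1 0 hF1y; csh S1 S2 S1' S2' g2.
  have g3 := cc 0 0 1 hF1y; csh S1 S2 S1' S2' g3.
  have g3' := cc 0 0 1 hF2y; csh S1 S2 S1' S2' g3'.
  rewrite -/a0' -/c0' in e1 e2 e3 e4 e5 f1 f2 f2' f3 f3' g1 g1' g2 g3 g3'.
  clearbody a0 c0 a0' c0'.
  have eal1 : al1 = q^-1 by apply: (lc1 (c1 := - 1 / (q * a0')) e1); fld.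
  have eal2 : al2 = - q^-1 by apply: (lc1 (c1 := 1 / (q * a0')) e2); fld.
  subst al1 al2.
  have hc0 : c0' = 0 by apply: (lc1 (c1 := - 1 / (1 + q)) e3); fld.
  subst c0'.
  have ega : ga1 * ga2^-1 = q^-1 by apply: (lc1 (c1 := - 1 / (q * a0')) e4); fld.
  have ebe : be1 * be2^-1 = q^-1 by apply: (lc1 (c1 := - 1 / (q * a0')) e5); fld.
  have hga2 : ga2 = q * ga1 by apply: (lc1 (c1 := - q * ga2) ega); fld.
  have hbe2 : be2 = q * be1 by apply: (lc1 (c1 := - q * be2) ebe); fld.
  subst ga2 be2.
  have hp1 : coef3 (F gx) 1 0 0 = 0 by apply: (lc1 (c1 := - q / (q - 1)) f1); fld.
  have hp2 : coef3 (F gx) 0 1 0 = 0.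
    by apply: (lc2 (c1 := - 1 / ((q - 1) * be1)) (c2 := 1 / ((q - 1) * be1)) f2 f2'); fld.
  have hp3 : coef3 (F gx) 0 0 1 = 0.
    by apply: (lc2 (c1 := - 1 / ((q - 1) * ga1)) (c2 := 1 / ((q - 1) * ga1)) f3 f3'); fld.
  have hw1 : coef3 (F gy) 1 0 0 = 0.
    by apply: (lc2 (c1 := q ^+ 2 / (q - 1)) (c2 := q / (q - 1)) g1 g1'); fld.
  have hw2 : coef3 (F gy) 0 1 0 = 0 by apply: (lc1 (c1 := - 1 / ((q - 1) * be1)) g2); fld.
  split; [by [] | split; [by [] | split; [exact: ebe | split; [exact: ega | split]]]].
  exact: hcomp_0 hp1 hp2 hp3.
  apply: hcomp_z hw1 hw2 _.
  apply: (lc3 (c1 := - 1 / (2 * q * be1)) (c2 := 1 / (2 * q ^+ 2 * be1))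
     (c3 := - a0' / (2 * q * be1 * ga1)) g3 g3' Kc); fld.
move=> c0n.
rewrite Fxz in hF1y hF2y.
have e1 := cc 0 0 0 hF1z; csh S1 S2 S1' S2' e1.
have e2 := cc 0 0 0 hF2z; csh S1 S2 S1' S2' e2.
have e3 := cc 1 0 0 Fzx; csh S1 S2 S1' S2' e3.
have e4 := cc 0 0 1 Fzx; csh S1 S2 S1' S2' e4.
have e5 := cc 0 1 0 Fzy; csh S1 S2 S1' S2' e5.
have f1 := cc 1 0 0 hF1z; csh S1 S2 S1' S2' f1.
have f1' := cc 1 0 0 hF2z; csh S1 S2 S1' S2' f1'.
have f2 := cc 0 1 0 hF1z; csh S1 S2 S1' S2' f2.
have f2' := cc 0 1 0 hF2z; csh S1 S2 S1' S2' f2'.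
have f3 := cc 0 0 1 hF1z; csh S1 S2 S1' S2' f3.
have g1 := cc 1 0 0 hF1y; csh S1 S2 S1' S2' g1.
have g1' := cc 1 0 0 hF2y; csh S1 S2 S1' S2' g1'.
have g2 := cc 0 1 0 hF1y; csh S1 S2 S1' S2' g2.
have g3 := cc 0 0 1 hF1y; csh S1 S2 S1' S2' g3.
have g3' := cc 0 0 1 hF2y; csh S1 S2 S1' S2' g3'.
rewrite -/a0' -/c0' in e1 e2 e3 e4 e5 f1 f1' f2 f2' f3 g1 g1' g2 g3 g3'.
clearbody a0 c0 a0' c0'.
have ega1 : ga1 = q^-1 by apply: (lc1 (c1 := - 1 / (q * c0')) e1); fld.
have ega2 : ga2 = - q^-1 by apply: (lc1 (c1 := 1 / (q * c0')) e2); fld.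
subst ga1 ga2.
have ha0 : a0' = 0 by apply: (lc1 (c1 := 1 / (1 + q)) e4); fld.
subst a0'.
have eal : al1 * al2^-1 = q by apply: (lc1 (c1 := 1 / c0') e3); fld.
have ebe : be1 * be2^-1 = q by apply: (lc1 (c1 := 1 / c0') e5); fld.
have hal1 : al1 = q * al2 by apply: (lc1 (c1 := al2) eal); fld.
have hbe1 : be1 = q * be2 by apply: (lc1 (c1 := be2) ebe); fld.
subst al1 be1.
have hp1 : coef3 (F gz) 1 0 0 = 0.
  by apply: (lc2 (c1 := 1 / ((q - 1) * al2)) (c2 := - 1 / ((q - 1) * al2)) f1 f1'); fld.
have hp2 : coef3 (F gz) 0 1 0 = 0.
  by apply: (lc2 (c1 := 1 / ((q - 1) * be2)) (c2 := - 1 / ((q - 1) * be2)) f2 f2'); fld.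
have hp3 : coef3 (F gz) 0 0 1 = 0 by apply: (lc1 (c1 := - q / (q - 1)) f3); fld.
have hw2 : coef3 (F gy) 0 1 0 = 0 by apply: (lc1 (c1 := - 1 / (q * (q - 1) * be2)) g2); fld.
have hw3 : coef3 (F gy) 0 0 1 = 0.
  by apply: (lc2 (c1 := - q / (q - 1)) (c2 := - q ^+ 2 / (q - 1)) g3 g3'); fld.
split; [by [] | split; [by [] | split; [exact: ebe | split; [exact: eal | split]]]].
exact: hcomp_0 hp1 hp2 hp3.
apply: hcomp_x _ hw2 hw3.
apply: (lc3 (c1 := - 1 / (2 * q ^+ 2 * be2)) (c2 := 1 / (2 * q * be2))
   (c3 := - c0' / (2 * al2 * be2)) g1 g1' Kc); fld.
Qed.
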